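(* Let $a<b<c$ be elements of $\mathcal{C}_n$. Every element $\alpha$ of the interior of the triangle $\triangle^{(n)}\{a,b,c\}$ can be written in a unique way as $\alpha=\beta+\gamma$ with $\beta\in\mathcal{STR}^{(n)}\{a,b\}$ and $\gamma\in\mathcal{STR}^{(n)}\{a,c\}$.
   Context: $\mathcal{C}_n=\{0,1,\dots,n-1\}$ with its usual order; $\widehat{\mathcal{E}}_{\mathcal{C}_n}$ is the set of all order-preserving maps $\mathcal{C}_n\to\mathcal{C}_n$ (not required to fix $0$), with addition $(\beta+\gamma)(x)=\max(\beta(x),\gamma(x))$. The triangle $\triangle^{(n)}\{a,b,c\}$ is the set of $\alpha\in\widehat{\mathcal{E}}_{\mathcal{C}_n}$ with image contained in $\{a,b,c\}$; the string $\mathcal{STR}^{(n)}\{x,y\}$ (for $x<y$) is the set of $\alpha\in\widehat{\mathcal{E}}_{\mathcal{C}_n}$ with image contained in $\{x,y\}$. The interior of the triangle is the set of its elements not lying in any of the strings $\mathcal{STR}^{(n)}\{a,b\}$, $\mathcal{STR}^{(n)}\{a,c\}$, $\mathcal{STR}^{(n)}\{b,c\}$, i.e. the $\alpha$ with image exactly $\{a,b,c\}$. *)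

(* Defs.v *)
From mathcomp Require Import all_boot.
Set Implicit Arguments. Unset Strict Implicit. Unset Printing Implicit Defensive.

(* C_n = 'I_n = {0,...,n-1} with its usual order; maps C_n -> C_n are
   finite functions {ffun 'I_n -> 'I_n}. *)

(* \hat{E}_{C_n}: all order-preserving maps C_n -> C_n (not required to fix 0). *)
Definition Ehat (n : nat) : {set {ffun 'I_n -> 'I_n}} :=
  [set f : {ffun 'I_n -> 'I_n} | [forall x : 'I_n, forall y : 'I_n, (x <= y) ==> (f x <= f y)]].

Definition addE (n : nat) (f g : {ffun 'I_n -> 'I_n}) : {ffun 'I_n -> 'I_n} :=
  [ffun x => if f x <= g x then g x else f x].

Definition img (n : nat) (f : {ffun 'I_n -> 'I_n}) : {set 'I_n} :=
  [set f x | x in 'I_n].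

Definition triangle (n : nat) (a b c : 'I_n) : {set {ffun 'I_n -> 'I_n}} :=
  [set f in Ehat n | img f \subset [set a; b; c]].

Definition STR (n : nat) (x y : 'I_n) : {set {ffun 'I_n -> 'I_n}} :=
  [set f in Ehat n | img f \subset [set x; y]].

(* interior of the triangle: elements of the triangle lying in none of the
   three strings (equivalently, image exactly {a,b,c}) *)
Definition triangle_interior (n : nat) (a b c : 'I_n) : {set {ffun 'I_n -> 'I_n}} :=
  [set f in triangle a b c | (f \notin STR a b) && (f \notin STR a c) && (f \notin STR b c)].

(* Main.v *)
Require Import Defs.
From mathcomp Require Import all_boot.
From mathcomp Require Import zify.

Lemma imgP n (f : {ffun 'I_n -> 'I_n}) (S : {set 'I_n}) :
  (img f \subset S) = [forall z, f z \in S].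
Proof.
apply/subsetP/forallP => H.
- move=> z; apply: H; apply/imsetP; by exists z.
- move=> _ /imsetP [z _ ->]; exact: H.
Qed.

Lemma EhatP n (f : {ffun 'I_n -> 'I_n}) :
  f \in Ehat n -> forall x y : 'I_n, x <= y -> f x <= f y.
Proof. rewrite inE => /forallP H x y; exact: (implyP (forallP (H x) y)). Qed.

Lemma EhatI n (f : {ffun 'I_n -> 'I_n}) :
  (forall x y : 'I_n, x <= y -> f x <= f y) -> f \in Ehat n.
Proof. move=> H; rewrite inE; apply/forallP=> x; apply/forallP=> y; apply/implyP; exact: H. Qed.

Lemma STRP n (x y : 'I_n) f :
  f \in STR x y = (f \in Ehat n) && [forall z, (f z == x) || (f z == y)].
Proof.
rewrite /STR inE imgP; congr (_ && _); apply: eq_forallb => z; by rewrite !inE.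
Qed.

Theorem proposition21 (n : nat) (a b c : 'I_n) :
  a < b -> b < c ->
  forall alpha, alpha \in triangle_interior a b c ->
    exists beta gamma,
      [/\ beta \in STR a b, gamma \in STR a c & alpha = addE beta gamma] /\
      (forall beta' gamma', beta' \in STR a b -> gamma' \in STR a c ->
         alpha = addE beta' gamma' -> beta' = beta /\ gamma' = gamma).
Proof.
move=> ab bc alpha.
rewrite /triangle_interior /triangle inE inE imgP !STRP.
case/and3P=> [/andP[He /forallP Hv] /andP[_ H2] _].
have Hm := @EhatP _ _ He.
have Hv' : forall z, [|| alpha z == a, alpha z == b | alpha z == c].
  by move=> z; have := Hv z; rewrite !inE -orbA.
rewrite He /= in H2.
move/forallPn: H2 => [y0 Hy0].
have Hy : alpha y0 = b.
  move: (Hv' y0) Hy0; case/orP=> [->//|]; case/orP=> /eqP -> //.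
  by rewrite eqxx orbT.
have eab : (a == b) = false by apply/negbTE; rewrite neq_ltn ab.
have eba : (b == a) = false by rewrite eq_sym.
have ebc : (b == c) = false by apply/negbTE; rewrite neq_ltn bc.
have ecb : (c == b) = false by rewrite eq_sym.
have eac : (a == c) = false by apply/negbTE; rewrite neq_ltn (ltn_trans ab bc).
have eca : (c == a) = false by rewrite eq_sym.
pose F := fintype_ordinal__canonical__fintype_Finite n.
have eab2 : (@eq_op F a b) = false := eab.
have eba2 : (@eq_op F b a) = false := eba.
have ebc2 : (@eq_op F b c) = false := ebc.
have ecb2 : (@eq_op F c b) = false := ecb.
have eac2 : (@eq_op F a c) = false := eac.
have eca2 : (@eq_op F c a) = false := eca.
have eaa2 : (@eq_op F a a) = true := eqxx a.
have ebb2 : (@eq_op F b b) = true := eqxx b.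
have ecc2 : (@eq_op F c c) = true := eqxx c.
have EE := (eab, eba, ebc, ecb, eac, eca, eab2, eba2, ebc2, ecb2, eac2, eca2, eaa2, ebb2, ecc2).
exists [ffun x => if alpha x == c then b else alpha x].
exists [ffun x => if alpha x == b then a else alpha x].
have Hv2 : forall x, (alpha x = a) \/ (alpha x = b) \/ (alpha x = c).
  by move=> x; case/or3P: (Hv' x) => /eqP ->; auto.
split; first split.
- rewrite STRP; apply/andP; split.
  + apply: (@EhatI _) => x y xy; rewrite !ffunE; have := Hm _ _ xy.
    case: (Hv2 x) => [->|[->|->]]; case: (Hv2 y) => [->|[->|->]];
      rewrite ?EE /=; clear -ab bc; lia.
  + apply/forallP=> x; rewrite ffunE.
    by case: (Hv2 x) => [->|[->|->]]; rewrite ?EE.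
- rewrite STRP; apply/andP; split.
  + apply: (@EhatI _) => x y xy; rewrite !ffunE; have := Hm _ _ xy.
    case: (Hv2 x) => [->|[->|->]]; case: (Hv2 y) => [->|[->|->]];
      rewrite ?EE /=; clear -ab bc; lia.
  + apply/forallP=> x; rewrite ffunE.
    by case: (Hv2 x) => [->|[->|->]]; rewrite ?EE.
- apply/ffunP=> x; rewrite !ffunE.
  case: (Hv2 x) => [->|[->|->]]; rewrite ?EE /=; case: ifP => H //;
    clear -ab bc H; lia.
- move=> be ga; rewrite !STRP => /andP[Hbe /forallP Vb] /andP[Hga /forallP Vg] Ea.
  have Hbm := @EhatP _ _ Hbe.
  have Vb2 : forall x, be x = a \/ be x = b.
    by move=> x; case/orP: (Vb x) => /eqP ->; auto.
  have Vg2 : forall x, ga x = a \/ ga x = c.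
    by move=> x; case/orP: (Vg x) => /eqP ->; auto.
  have Eax : forall x, alpha x = (if be x <= ga x then ga x else be x)
    by move=> x; rewrite Ea ffunE.
  have Vby0 : be y0 = b.
    have := Eax y0; rewrite Hy.
    case: (Vb2 y0) => -> //; case: (Vg2 y0) => ->; case: ifP => H E;
      have := congr1 val E; clear -ab bc H; simpl; lia.
  split; apply/ffunP=> x; rewrite ffunE; have := Eax x;
    case: (Hv2 x) => [Ex|[Ex|Ex]]; rewrite Ex ?EE;
    case: (Vb2 x) => Hbx; rewrite Hbx; case: (Vg2 x) => ->; case: ifP => H E //;
    try (have := congr1 val E; clear -ab bc H; simpl; lia).
  have yx : y0 < x.
    rewrite ltnNge; apply/negP => /Hm; rewrite Hy Ex; clear -ab bc; lia.
  have := Hbm _ _ (ltnW yx); rewrite Vby0.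
  rewrite Hbx => h; exfalso; clear -ab h; lia.
Qed.
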